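(* Let $\mathcal{M}$ be a CTMC with $E(s)=1$ for all states $s$ and a unique absorbing goal state $g$; let $\delta>0$, $c=e^{\delta}$, $\mathcal{M}'=c\cdot\mathcal{M}$, $t\geq0$, and $N=\left\lceil\frac{(e^{\delta}-1)t}{\delta}\right\rceil$. Then $$\mathrm{Diff}_t(\mathcal{M}):=\left|\mathrm{Pr}^{\mathcal{M}'}(\lozenge^{\leq t}g)-\mathrm{Pr}^{\mathcal{M}}(\lozenge^{\leq t}g)\right|\leq\mathrm{Diff}_t(\mathcal{E}_N)=\sum_{k=0}^{N-1}\frac{t^k}{k!}\left(e^{-t}-c^ke^{-ct}\right).$$
   Context: In a CTMC the process stays in state $s$ an exponentially distributed time with rate $E(s)$ and then jumps to $s'$ with probability $P(s,s')$. $c\cdot\mathcal{M}$ is obtained by multiplying all exit rates by $c$. $\mathrm{Pr}^{\mathcal{M}}(\lozenge^{\leq t}g)$: probability of reaching $g$ from the initial state within time $t$. The Erlang CTMC $\mathcal{E}_N$ has states $s_0,\dots,s_{N-1},s_N=g$, initial state $s_0$ (only $g$ if $N=0$), all exit rates $1$, $P(s_i,s_{i+1})=1$ for $i<N$, $P(g,g)=1$, with $g$ labeled differently from the equally labeled $s_0,\dots,s_{N-1}$; $\mathrm{Diff}_t(\mathcal{E}_N)=|\mathrm{Pr}^{\mathcal{E}_N}(\lozenge^{\leq t}g)-\mathrm{Pr}^{c\cdot\mathcal{E}_N}(\lozenge^{\leq t}g)|$. *)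

(* Defs.v *)
From HB Require Import structures.
From mathcomp Require Import all_boot all_order all_algebra.
From mathcomp Require Import all_classical all_reals all_analysis.
Set Implicit Arguments. Unset Strict Implicit. Unset Printing Implicit Defensive.
Import Order.TTheory GRing.Theory Num.Theory.
Import numFieldNormedType.Exports.
Local Open Scope classical_set_scope.
Local Open Scope ring_scope.

(* A CTMC over a finite state space S is given by exit rates E : S -> R,
   a (stochastic) jump matrix P : S -> S -> R and an initial state s0. *)

(* reach_within E P G n s t = probability, starting in s, of reaching the
   goal set G within time t using at most n jumps.  This is the n-th Kleene
   iterate (from 0) of the standard Volterra integral characterization of
   time-bounded reachability in CTMCs (Baier-Haverkort-Hermanns-Katoen):
     Pr(s, <>^{<=t} G) = 1                                     if s in G
                       = int_0^t E(s) e^{-E(s)x} sum_s' P(s,s') Pr(s', <>^{<=t-x} G) dx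
                                                                otherwise. *)
Fixpoint reach_within (R : realType) (S : finType) (E : S -> R)
    (P : S -> S -> R) (G : pred S) (n : nat) (s : S) (t : R) : R :=
  if s \in G then 1 else
  match n with
  | 0%N => 0
  | n'.+1 => \int[lebesgue_measure]_(x in `[0, t])
       (E s * expR (- (E s * x)) *
        \sum_(s' : S) P s s' * reach_within E P G n' s' (t - x))
  end.

Definition reach_prob (R : realType) (S : finType) (E : S -> R)
    (P : S -> S -> R) (s0 : S) (G : pred S) (t : R) : R :=
  limn (fun n => reach_within E P G n s0 t).

Definition scale_rates (R : realType) (S : finType) (c : R) (E : S -> R) : S -> R :=
  fun s => c * E s.

Definition Diff (R : realType) (S : finType) (E : S -> R) (P : S -> S -> R)
    (s0 g : S) (c t : R) : R :=
  `| reach_prob E P s0 (pred1 g) t - reach_prob (scale_rates c E) P s0 (pred1 g) t |.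

(* The Erlang CTMC E_N: states s_0,...,s_{N-1}, s_N = g, encoded as 'I_N.+1,
   with g = ord_max, initial state ord0 (= g when N = 0), all rates 1,
   P(s_i,s_{i+1}) = 1 for i < N and P(g,g) = 1. *)
Definition erlang_rate (R : realType) (N : nat) : 'I_N.+1 -> R := fun _ => 1.

Definition erlang_P (R : realType) (N : nat) : 'I_N.+1 -> 'I_N.+1 -> R :=
  fun i j => if i == ord_max then (j == ord_max)%:R
             else ((nat_of_ord j) == (nat_of_ord i).+1)%:R.

Definition Diff_erlang (R : realType) (N : nat) (c t : R) : R :=
  Diff (@erlang_rate R N) (@erlang_P R N) ord0 ord_max c t.

(* Main.v *)
Require Import Defs.
From HB Require Import structures.
From mathcomp Require Import all_boot all_order all_algebra.
From mathcomp Require Import all_classical all_reals all_analysis.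
From mathcomp Require Import ring lra.
Import Order.TTheory GRing.Theory Num.Theory.
Import numFieldNormedType.Exports.
Local Open Scope classical_set_scope.
Local Open Scope ring_scope.

Section S.
Context {R : realType}.

Definition dbl (f : R -> R) := forall x, derivable f x 1.

Lemma dbl_cont f : dbl f -> continuous f.
Proof. move=> df x; apply/differentiable_continuous; apply/derivable1_diffP; exact: df. Qed.

Lemma dblD f g : dbl f -> dbl g -> dbl (fun x => f x + g x).
Proof. by move=> df dg x; rewrite -addrfctE; apply: derivableD. Qed.
Lemma dblB f g : dbl f -> dbl g -> dbl (fun x => f x - g x).
Proof. by move=> df dg x; have := @derivableB R R R f g x 1 (df x) (dg x). Qed.
Lemma dblM f g : dbl f -> dbl g -> dbl (fun x => f x * g x).
Proof. by move=> df dg x; have := @derivableM R R f g x 1 (df x) (dg x). Qed.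
Lemma dblX f n : dbl f -> dbl (fun x => f x ^+ n).
Proof. by move=> df x; have := @derivableX R R f n x 1 (df x); rewrite exprfctE. Qed.
Lemma dbl_cst (a : R) : dbl (fun _ => a).
Proof. by move=> x; have := @derivable_cst R R R a x 1. Qed.
Lemma dbl_id : dbl (fun x => x).
Proof. by move=> x; have := @derivable_id R R x 1. Qed.
Lemma dbl_comp f g : dbl f -> dbl g -> dbl (fun x => g (f x)).
Proof.
move=> df dg x; apply/derivable1_diffP.
have := @differentiable_comp R R R R f g x.
apply; apply/derivable1_diffP; [exact: df|exact: dg].
Qed.
Lemma dbl_expR : dbl expR.
Proof. by move=> x; apply: derivable_expR. Qed.
Lemma dbl_sum n (h : 'I_n -> R -> R) : (forall i, dbl (h i)) -> dbl (fun x => \sum_(i < n) h i x).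
Proof.
elim: n h => [|n IH] h dh.
  have -> : (fun x => \sum_(i < 0) h i x) = (fun _ => 0) by apply/funext => x; rewrite big_ord0.
  exact: dbl_cst.
have -> : (fun x => \sum_(i < n.+1) h i x) = (fun x => \sum_(i < n) h (widen_ord (leqnSn n) i) x + h ord_max x).
  by apply/funext => x; rewrite big_ord_recr.
apply: dblD => //; exact: IH.
Qed.

Lemma isd_comp (f g : R -> R) (x df dg : R) : is_derive x 1 f df -> is_derive (f x) 1 g dg ->
  is_derive x 1 (fun y => g (f y)) (dg * df).
Proof.
move=> Hf Hg.
have d1 : derivable f x 1 by exact: ex_derive.
have d2 : derivable g (f x) 1 by exact: ex_derive.
have dc : derivable (g \o f) x 1.
  apply/derivable1_diffP.
  have := @differentiable_comp R R R R f g x.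
  by apply; apply/derivable1_diffP.
apply: DeriveDef; first exact: dc.
have := @derive1_comp R f g x d1 d2.
rewrite !derive1E => ->.
by rewrite !derive_val.
Qed.


Lemma isd_cont (F : R -> R) (f : R -> R) : (forall x : R, is_derive x (1:R) F (f x)) -> continuous F.
Proof. move=> h; apply: dbl_cont => x; exact: ex_derive. Qed.

Lemma ftc0 (f F : R -> R) (t : R) : 0 <= t -> (forall x : R, is_derive x (1:R) F (f x)) ->
  continuous f ->
  \int[lebesgue_measure]_(x in `[0, t]) f x = F t - F 0.
Proof.
move=> t0 dF cf.
have cF := @isd_cont F f dF.
rewrite le_eqVlt in t0; case/orP: t0 => [/eqP<-|t0].
  by rewrite set_itv1 Rintegral_set1 subrr.
rewrite /Rintegral (continuous_FTC2 (f:=f) (F:=F) t0).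
- by rewrite -EFinB.
- exact: continuous_subspaceT.
- split.
  + move=> x _; exact: ex_derive.
  + apply: cvg_at_right_filter; exact: cF.
  + apply: cvg_at_left_filter; exact: cF.
- by move=> x _; rewrite derive1E derive_val.
Qed.


Lemma dblN f : dbl f -> dbl (fun x => - f x).
Proof. by move=> df x; have := @derivableN R R R f x 1 (df x). Qed.

Lemma isdD f g x (df dg : R) : is_derive x (1:R) f df -> is_derive x (1:R) g dg ->
  is_derive x (1:R) (fun y => f y + g y) (df + dg).
Proof. by move=> a b; have := @is_deriveD R R R f g x 1 df dg a b. Qed.
Lemma isdB f g x (df dg : R) : is_derive x (1:R) f df -> is_derive x (1:R) g dg ->
  is_derive x (1:R) (fun y => f y - g y) (df - dg).
Proof. by move=> a b; have := @is_deriveB R R R f g x 1 df dg a b. Qed.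
Lemma isdN f x (df : R) : is_derive x (1:R) f df ->
  is_derive x (1:R) (fun y => - f y) (- df).
Proof. by move=> a; have := @is_deriveN R R R f x 1 df a. Qed.
Lemma isdM f g x (df dg : R) : is_derive x (1:R) f df -> is_derive x (1:R) g dg ->
  is_derive x (1:R) (fun y => f y * g y) (f x * dg + g x * df).
Proof. by move=> a b; have := @is_deriveM R R f g x 1 df dg a b. Qed.
Lemma isdX f n x (df : R) : is_derive x (1:R) f df ->
  is_derive x (1:R) (fun y => f y ^+ n) (n%:R * f x ^+ n.-1 * df).
Proof. by move=> a; have := @is_deriveX R R f n x 1 df a; rewrite exprfctE. Qed.
Lemma isd_cst (a x : R) : is_derive x (1:R) (fun _ => a) 0.
Proof. by have := @is_derive_cst R R R a x 1. Qed.
Lemma isd_id (x : R) : is_derive x (1:R) (fun y => y) 1.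
Proof. by have := @is_derive_id R R x 1. Qed.
Lemma isd_expR (x : R) : is_derive x (1:R) expR (expR x).
Proof. exact: is_derive_expR. Qed.

Definition Dp (j : nat) (u : R) : R := expR (- u) * u ^+ j / (j`!)%:R.
Definition Fk (k : nat) (u : R) : R := 1 - \sum_(j < k) Dp j u.

Lemma dbl_Dp j : dbl (Dp j).
Proof.
rewrite /Dp; apply: dblM; last exact: dbl_cst.
apply: dblM; last by apply: dblX; exact: dbl_id.
apply: (@dbl_comp (fun x => - x) expR); last exact: dbl_expR.
apply: dblN; exact: dbl_id.
Qed.

Lemma dbl_Fk k : dbl (Fk k).
Proof.
rewrite /Fk; apply: dblB; first exact: dbl_cst.
apply: dbl_sum => i; exact: dbl_Dp.
Qed.

Lemma dbl_lin (r t : R) : dbl (fun x => r * (t - x)).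
Proof. apply: dblM; first exact: dbl_cst. apply: dblB; [exact: dbl_cst|exact: dbl_id]. Qed.

Lemma dbl_eN (r : R) : dbl (fun x => expR (- (r * x))).
Proof.
apply: (@dbl_comp (fun x => - (r * x)) expR); last exact: dbl_expR.
apply: dblN; apply: dblM; [exact: dbl_cst|exact: dbl_id].
Qed.

Lemma integ_cont (f : R -> R) (t : R) : dbl f ->
  lebesgue_measure.-integrable `[0, t] (EFin \o f).
Proof.
move=> df; apply: continuous_compact_integrable; first exact: segment_compact.
apply: continuous_subspaceT; exact: dbl_cont.
Qed.

Lemma I1 (r t : R) : 0 <= t ->
  \int[lebesgue_measure]_(x in `[0, t]) (r * expR (- (r * x))) = 1 - expR (- (r * t)).
Proof.
move=> t0.
have hd : forall x : R, is_derive x (1:R) (fun x => - expR (- (r * x))) (r * expR (- (r * x))).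
  move=> x; apply: is_derive_eq.
  have -> : r%:A = r :> R by rewrite /GRing.scale /= mulr1.
  ring.
have hc : continuous (fun x => r * expR (- (r * x))).
  apply: dbl_cont; apply: dblM; [exact: dbl_cst|exact: dbl_eN].
rewrite (@ftc0 _ _ _ t0 hd hc).
by rewrite mulr0 oppr0 expR0; ring.
Qed.

Lemma I2 (r t : R) (j : nat) : 0 <= t ->
  \int[lebesgue_measure]_(x in `[0, t]) (r * expR (- (r * x)) * Dp j (r * (t - x)))
   = Dp j.+1 (r * t).
Proof.
move=> t0.
have hd : forall x : R, is_derive x (1:R)
   (fun x => - (expR (- (r * t)) * (r * (t - x)) ^+ j.+1 / (j.+1)`!%:R))
   (r * expR (- (r * x)) * Dp j (r * (t - x))).
  move=> x.
  have h1 := @isdM (fun _ => r) (fun y => t - y) x 0 (0 - 1) (isd_cst r x)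
     (@isdB (fun _ => t) (fun y => y) x 0 1 (isd_cst t x) (isd_id x)).
  have h2 := @isdX (fun y => r * (t - y)) j.+1 x _ h1.
  have h3 := @isdM (fun _ => expR (- (r * t))) (fun y => (r * (t - y)) ^+ j.+1) x 0 _
     (isd_cst _ x) h2.
  have h4 := @isdM (fun y => expR (- (r * t)) * (r * (t - y)) ^+ j.+1) (fun _ => (j.+1)`!%:R^-1) x _ 0
     h3 (isd_cst _ x).
  have h5 := @isdN _ _ _ h4.
  apply: (is_derive_eq h5).
  rewrite /Dp factS natrM /=.
  have e : expR (- (r * t)) = expR (- (r * x)) * expR (- (r * (t - x))) by rewrite -expRD; congr expR; ring.
  rewrite e.
  have f0 : (j`!)%:R != 0 :> R by rewrite pnatr_eq0 -lt0n fact_gt0.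
  have f1 : (j.+1)%:R != 0 :> R by rewrite pnatr_eq0.
  field.
  by apply/andP; split.
have hc : continuous (fun x => r * expR (- (r * x)) * Dp j (r * (t - x))).
  apply: dbl_cont; apply: dblM; first by apply: dblM; [exact: dbl_cst|exact: dbl_eN].
  apply: (@dbl_comp (fun x => r * (t - x)) (Dp j)); [exact: dbl_lin|exact: dbl_Dp].
rewrite (@ftc0 _ _ _ t0 hd hc).
rewrite subrr mulr0 expr0n /=.
by rewrite /Dp subr0 mulr0 mul0r oppr0 sub0r opprK.
Qed.

Lemma FkS k u : Fk k.+1 u = Fk k u - Dp k u.
Proof. by rewrite /Fk big_ord_recr /= opprD addrA. Qed.

Lemma conv (r t : R) (k : nat) : 0 <= t ->
  \int[lebesgue_measure]_(x in `[0, t]) (r * expR (- (r * x)) * Fk k (r * (t - x)))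
   = Fk k.+1 (r * t).
Proof.
move=> t0; elim: k => [|k IH].
  rewrite FkS /Fk big_ord0 subr0 /Dp expr0 divr1 mulr1 -(@I1 r t t0).
  by apply: eq_Rintegral => x _; rewrite big_ord0 subr0 mulr1.
rewrite FkS -IH -(@I2 r t k t0).
rewrite -RintegralB //.
- by apply: eq_Rintegral => x _; rewrite FkS mulrBr.
- apply: integ_cont; apply: dblM; first by apply: dblM; [exact: dbl_cst|exact: dbl_eN].
  apply: (@dbl_comp (fun x => r * (t - x)) (Fk k)); [exact: dbl_lin|exact: dbl_Fk].
- apply: integ_cont; apply: dblM; first by apply: dblM; [exact: dbl_cst|exact: dbl_eN].
  apply: (@dbl_comp (fun x => r * (t - x)) (Dp k)); [exact: dbl_lin|exact: dbl_Dp].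
Qed.

Fixpoint hit {S : finType} (P : S -> S -> R) (g : S) (k : nat) (s : S) : R :=
  match k with
  | 0 => (s == g)%:R
  | k'.+1 => if s == g then 0 else \sum_(s' : S) P s s' * hit P g k' s'
  end.

Lemma Rint_sum (t : R) m (c : nat -> R) (f : nat -> R -> R) : (forall k, dbl (f k)) ->
  \int[lebesgue_measure]_(x in `[0, t]) (\sum_(k < m) c k * f k x)
  = \sum_(k < m) c k * \int[lebesgue_measure]_(x in `[0, t]) f k x.
Proof.
move=> df; elim: m => [|m IH].
  rewrite big_ord0 (@eq_Rintegral _ _ _ _ _ (fun _ => 0)); last by move=> x _; rewrite big_ord0.
  by rewrite Rintegral_cst // mul0r.
rewrite big_ord_recr /= -IH -RintegralZl //; last exact: integ_cont.
rewrite -RintegralD //.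
- by apply: eq_Rintegral => x _; rewrite big_ord_recr.
- apply: integ_cont; apply: dbl_sum => i; apply: dblM; [exact: dbl_cst|exact: df].
- apply: integ_cont; apply: dblM; [exact: dbl_cst|exact: df].
Qed.

Lemma closed (S : finType) (E : S -> R) (P : S -> S -> R) (g : S) (r : R)
  (hE : forall s, E s = r) (n : nat) (s : S) (t : R) : 0 <= t ->
  reach_within E P (pred1 g) n s t = \sum_(k < n.+1) hit P g k s * Fk k (r * t).
Proof.
elim: n s t => [|n IH] s t t0.
  rewrite /= big_ord1 /= /Fk big_ord0 subr0 mulr1 inE.
  by case: (s == g).
rewrite /= big_ord_recl /= inE.
have F0 : Fk 0 (r * t) = 1 by rewrite /Fk big_ord0 subr0.
case: (boolP (s == g)) => sg.
  by rewrite F0 mulr1 big1 ?addr0 // => i _; rewrite mul0r.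
rewrite mul0r add0r !hE.
transitivity (\int[lebesgue_measure]_(x in `[0, t]) (\sum_(k < n.+1)
    (\sum_(s' : S) P s s' * hit P g k s') * (r * expR (- (r * x)) * Fk k (r * (t - x))))).
  apply: eq_Rintegral.
  move=> x; rewrite inE /= in_itv /= => /andP[x0 xt].
  have tx : 0 <= t - x by rewrite subr_ge0.
  under eq_bigr => s' _ do rewrite (IH s' (t - x) tx).
  under [RHS]eq_bigr => k _ do rewrite mulr_suml.
  rewrite [RHS]exchange_big /= mulr_sumr.
  apply: eq_bigr => s' _; rewrite mulr_sumr mulr_sumr.
  by apply: eq_bigr => k _; ring.
rewrite (@Rint_sum t n.+1 (fun k => \sum_(s' : S) P s s' * hit P g k s')
   (fun k x => r * expR (- (r * x)) * Fk k (r * (t - x)))); last first.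
  move=> k; apply: dblM; first by apply: dblM; [exact: dbl_cst|exact: dbl_eN].
  apply: (@dbl_comp (fun x => r * (t - x)) (Fk k)); [exact: dbl_lin|exact: dbl_Fk].
by apply: eq_bigr => k _; rewrite conv.
Qed.

Lemma hit_ge0 (S : finType) (P : S -> S -> R) (g : S) :
  (forall s s', 0 <= P s s') -> forall k s, 0 <= hit P g k s.
Proof.
move=> P0; elim=> [|k IH] s /=; first by case: (s == g).
case: (s == g) => //; apply: sumr_ge0 => s' _; apply: mulr_ge0 => //.
Qed.

Lemma hit_sum (S : finType) (P : S -> S -> R) (g : S) :
  (forall s s', 0 <= P s s') -> (forall s, \sum_(s' : S) P s s' = 1) ->
  forall n s, \sum_(k < n) hit P g k s <= 1.
Proof.
move=> P0 P1; elim=> [|n IH] s; first by rewrite big_ord0.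
rewrite big_ord_recl /=.
case: (boolP (s == g)) => sg.
  by rewrite big1 ?addr0 // => i _.
rewrite add0r.
under eq_bigr => i _ do rewrite add0n.
rewrite exchange_big /= -(P1 s); apply: ler_sum => s' _.
rewrite -mulr_sumr -[leRHS]mulr1; apply: ler_wpM2l => //.
Qed.

Lemma Dp_ge0 j u : 0 <= u -> 0 <= Dp j u.
Proof.
move=> u0; rewrite /Dp; apply: mulr_ge0; first apply: mulr_ge0.
- exact: expR_ge0.
- exact: exprn_ge0.
- by rewrite invr_ge0.
Qed.

Lemma Fk_le1 k u : 0 <= u -> Fk k u <= 1.
Proof.
move=> u0; rewrite /Fk lerBlDr lerDl; apply: sumr_ge0 => j _; exact: Dp_ge0.
Qed.

Lemma Fk_ge0 k u : 0 <= u -> 0 <= Fk k u.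
Proof.
elim: k u => [|k IH] u u0; first by rewrite /Fk big_ord0 subr0.
rewrite -[u]mul1r -conv //.
apply: Rintegral_ge0 => x; rewrite /= in_itv /= => /andP[x0 xu].
rewrite !mul1r; apply: mulr_ge0; first exact: expR_ge0.
by apply: IH; rewrite subr_ge0.
Qed.

Lemma isd_Dp j (x : R) : is_derive x (1:R) (Dp j)
   (if j is j'.+1 then Dp j' x - Dp j x else - Dp j x).
Proof.
have h_e := @isd_comp (fun y => - y) expR x (-1) (expR (- x)) (@isdN _ _ _ (isd_id x)) (isd_expR (- x)).
have h_p := @isdX (fun y => y) j x 1 (isd_id x).
have h_ep := @isdM (fun y => expR (- y)) (fun y => y ^+ j) x _ _ h_e h_p.
have h := @isdM (fun y => expR (- y) * y ^+ j) (fun _ => (j`!%:R)^-1) x _ 0 h_ep (isd_cst _ x).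
apply: (is_derive_eq h).
rewrite /Dp; case: j {h h_p h_ep} => [|j] /=.
  by rewrite fact0 expr0; ring.
rewrite factS natrM.
have f0 : (j`!)%:R != 0 :> R by rewrite pnatr_eq0 -lt0n fact_gt0.
have f1 : (j.+1)%:R != 0 :> R by rewrite pnatr_eq0.
rewrite exprS; field.
by apply/andP; split.
Qed.

Lemma isd_Fk k (x : R) : is_derive x (1:R) (Fk k.+1) (Dp k x).
Proof.
elim: k x => [|k IH] x.
  have -> : Fk 1 = (fun u => 1 - Dp 0 u) by apply/funext => u; rewrite FkS /Fk big_ord0 subr0.
  apply: (is_derive_eq (@isdB (fun _ => 1) (Dp 0) x 0 _ (isd_cst 1 x) (isd_Dp 0 x))).
  by rewrite /=; ring.
have -> : Fk k.+2 = (fun u => Fk k.+1 u - Dp k.+1 u) by apply/funext => u; rewrite FkS.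
apply: (is_derive_eq (@isdB (Fk k.+1) (Dp k.+1) x _ _ (IH x) (isd_Dp k.+1 x))).
by rewrite /=; ring.
Qed.

Lemma isd_dbl (f : R -> R) (x df : R) : is_derive x (1:R) f df -> derivable f x 1.
Proof. by case. Qed.
Lemma isd_val (f : R -> R) (x df : R) : is_derive x (1:R) f df -> (f^`())%classic x = df.
Proof. by case => _ <-; rewrite derive1E. Qed.

Lemma Fk_mono k u v : 0 <= u -> u <= v -> Fk k u <= Fk k v.
Proof.
case: k => [|k] u0 uv; first by rewrite /Fk !big_ord0.
apply: (@ger0_derive1_ndecr R (Fk k.+1) 0 v) => //.
- move=> x _; exact: (@isd_dbl _ _ _ (isd_Fk k x)).
- move=> x; rewrite in_itv /= => /andP[x0 _].
  by rewrite (@isd_val _ _ _ (isd_Fk k x)); apply: Dp_ge0; exact: ltW.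
- apply: continuous_subspaceT; exact: dbl_cont (dbl_Fk _).
Qed.

Lemma cvg_partial (h a : nat -> R) : (forall k, 0 <= h k) ->
  (forall n, \sum_(k < n) h k <= 1) -> (forall k, 0 <= a k <= 1) ->
  cvgn (fun n => \sum_(k < n.+1) h k * a k).
Proof.
move=> h0 h1 a01; apply: nondecreasing_is_cvgn.
  apply/nondecreasing_seqP => n; rewrite [leRHS]big_ord_recr /= lerDl.
  by apply: mulr_ge0 => //; case/andP: (a01 n.+1).
exists 1 => _ [n _ <-]; apply: le_trans (h1 n.+1).
apply: ler_sum => k _; rewrite -[leRHS]mulr1; apply: ler_wpM2l => //.
by case/andP: (a01 k).
Qed.

Lemma lim_diff (h a b : nat -> R) (M : R) : (forall k, 0 <= h k) ->
  (forall n, \sum_(k < n) h k <= 1) -> (forall k, 0 <= a k <= 1) ->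
  (forall k, 0 <= b k <= 1) -> 0 <= M -> (forall k, `|a k - b k| <= M) ->
  `|limn (fun n => \sum_(k < n.+1) h k * a k) - limn (fun n => \sum_(k < n.+1) h k * b k)| <= M.
Proof.
move=> h0 h1 a01 b01 M0 abM.
have ca := @cvg_partial _ _ h0 h1 a01.
have cb := @cvg_partial _ _ h0 h1 b01.
have bnd : forall n, `|\sum_(k < n.+1) h k * a k - \sum_(k < n.+1) h k * b k| <= M.
  move=> n; rewrite -sumrB.
  apply: le_trans (ler_norm_sum _ _ _) _.
  apply: le_trans (_ : \sum_(k < n.+1) h k * M <= M).
    apply: ler_sum => k _; rewrite -mulrBr normrM ger0_norm //.
    exact: ler_wpM2l.
  by rewrite -mulr_suml -[leRHS]mul1r; apply: ler_wpM2r.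
set A := (fun n => \sum_(k < n.+1) h k * a k) in ca *.
set B := (fun n => \sum_(k < n.+1) h k * b k) in cb *.
have cAB : (fun n => A n - B n) @ \oo --> limn A - limn B.
  exact: (cvgB ca cb).
rewrite ler_norml; apply/andP; split.
  apply: (cvgr_to_ge cAB).
  by apply: nearW => n /=; have := bnd n; rewrite ler_norml => /andP[].
apply: (cvgr_to_le cAB).
by apply: nearW => n /=; have := bnd n; rewrite ler_norml => /andP[].
Qed.

Lemma hit_erlang N k (i : 'I_N.+1) :
  hit (@erlang_P R N) ord_max k i = ((i + k)%N == N)%:R.
Proof.
elim: k i => [|k IH] i /=.
  by rewrite addn0 -val_eqE /=.
case: (boolP (i == ord_max)) => im.
  move/eqP: im => -> /=.
  have -> : (N + k.+1 == N)%N = false by apply/negbTE; rewrite -[X in _ != X]addn0 eqn_add2l.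
  by [].
have iN : (i < N)%N.
  by move: im (ltn_ord i); rewrite -val_eqE /= ltnS leq_eqVlt => /negbTE ->.
rewrite /erlang_P (negbTE im).
under eq_bigr => j _ do rewrite IH.
rewrite (bigD1 (inord i.+1)) //= inordK ?ltnS // eqxx mul1r addnS big1 ?addr0 //.
move=> j jne.
have -> : (nat_of_ord j == i.+1) = false.
  apply/negbTE; apply: contra jne => /eqP h; apply/eqP; apply: val_inj.
  by rewrite /= inordK ?h ?ltnS.
by rewrite mul0r.
Qed.

Lemma e_eq (c t : R) j : Dp j t - Dp j (c * t) =
  t ^+ j / (j`!)%:R * (expR (- t) - c ^+ j * expR (- (c * t))).
Proof. by rewrite /Dp exprMn; ring. Qed.

Lemma e_sign (delta t : R) j : 0 <= t ->
  (j%:R * delta <= (expR delta - 1) * t -> 0 <= Dp j t - Dp j (expR delta * t)) /\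
  ((expR delta - 1) * t <= j%:R * delta -> Dp j t - Dp j (expR delta * t) <= 0).
Proof.
move=> t0; rewrite e_eq.
have p0 : 0 <= t ^+ j / (j`!)%:R by apply: mulr_ge0; [exact: exprn_ge0|rewrite invr_ge0].
have ce : expR delta ^+ j * expR (- (expR delta * t)) = expR (j%:R * delta - expR delta * t).
  by rewrite expRD expRM_natl.
rewrite ce; split => h.
  apply: mulr_ge0 => //; rewrite subr_ge0 ler_expR; lra.
apply: mulr_ge0_le0 => //; rewrite subr_le0 ler_expR; lra.
Qed.

Lemma d_max (delta t : R) (N : nat) : 0 < delta -> 0 <= t ->
  N%:Z = Num.ceil ((expR delta - 1) * t / delta) ->
  forall k, Fk k (expR delta * t) - Fk k t <= Fk N (expR delta * t) - Fk N t.
Proof.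
move=> d0 t0 hN.
pose d k := Fk k (expR delta * t) - Fk k t.
have dS : forall k, d k.+1 = d k + (Dp k t - Dp k (expR delta * t)) by move=> k; rewrite /d !FkS; ring.
have ltN : forall j, (j < N)%N -> 0 <= Dp j t - Dp j (expR delta * t).
  move=> j jN; apply: (@e_sign delta t j t0).1.
  have : (j%:Z < Num.ceil ((expR delta - 1) * t / delta))%R by rewrite -hN ltz_nat.
  rewrite ceil_gt_int -pmulrn ltr_pdivlMr // => h; exact: ltW.
have geN : forall j, (N <= j)%N -> Dp j t - Dp j (expR delta * t) <= 0.
  move=> j jN; apply: (@e_sign delta t j t0).2.
  have := ceil_ge ((expR delta - 1) * t / delta); rewrite -hN -pmulrn ler_pdivrMr // => h.
  apply: le_trans h _; apply: ler_wpM2r; first exact: ltW.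
  by rewrite ler_nat.
move=> k; case: (leqP k N) => kN.
  have H : forall i, (i <= N)%N -> d (N - i)%N <= d N.
    elim=> [|i IH] iN; first by rewrite subn0.
    apply: le_trans (IH (ltnW iN)).
    rewrite -(subnSK iN) dS lerDl; apply: ltN.
    by rewrite ltn_subrL /=; case: (N) iN.
  by have := H (N - k)%N (leq_subr k N); rewrite subKn.
have H : forall i, d (N + i)%N <= d N.
  elim=> [|i IH]; first by rewrite addn0.
  apply: le_trans IH; rewrite addnS dS gerDl; apply: geN; exact: leq_addr.
by have := H (k - N)%N; rewrite subnKC // ltnW.
Qed.

Lemma erlang_lim N (E : 'I_N.+1 -> R) (r t : R) : (forall s, E s = r) -> 0 <= t ->
  limn (fun n => reach_within E (@erlang_P R N) (pred1 ord_max) n ord0 t) = Fk N (r * t).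
Proof.
move=> hE t0; apply: cvg_lim; first exact: Rhausdorff.
apply: cvg_near_cst.
near=> n.
have Nn : (N <= n)%N by near: n; exact: nbhs_infty_ge.
rewrite (@closed _ E (@erlang_P R N) ord_max r hE n ord0 t t0).
under eq_bigr => k _ do rewrite hit_erlang add0n.
have NS : (N < n.+1)%N by rewrite ltnS.
rewrite (bigD1 (Ordinal NS)) //= eqxx mul1r big1 ?addr0 // => i ine.
have -> : (nat_of_ord i == N) = false.
  apply/negbTE; apply: contra ine => /eqP h; apply/eqP; exact: val_inj.
by rewrite mul0r.
Unshelve. all: by end_near.
Qed.

End S.

Theorem proposition5 (R : realType) (S : finType) (E : S -> R)
    (P : S -> S -> R) (s0 g : S) (delta t : R) (N : nat) :
  (forall s, E s = 1) ->
  (forall s s', 0 <= P s s') ->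
  (forall s, \sum_(s' : S) P s s' = 1) ->
  P g g = 1 ->
  0 < delta -> 0 <= t ->
  (N%:Z = Num.ceil ((expR delta - 1) * t / delta)) ->
  Diff E P s0 g (expR delta) t <= Diff_erlang N (expR delta) t /\
  Diff_erlang N (expR delta) t =
    \sum_(0 <= k < N) (t ^+ k / (k`!)%:R *
                       (expR (- t) - expR delta ^+ k * expR (- (expR delta * t)))).
Proof.
move=> hE P0 P1 Pgg d0 t0 hN.
have c1 : 1 <= expR delta by rewrite -expR0 ler_expR; exact: ltW.
have ct0 : 0 <= expR delta * t by apply: mulr_ge0 => //; exact: expR_ge0.
have tct : t <= expR delta * t by rewrite -{1}[t]mul1r ler_wpM2r.
have hEc : forall s, scale_rates (expR delta) E s = expR delta.
  by move=> s; rewrite /scale_rates hE mulr1.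
have dN0 : 0 <= Fk N (expR delta * t) - Fk N t by rewrite subr_ge0 Fk_mono.
have Herl : Diff_erlang N (expR delta) t = Fk N (expR delta * t) - Fk N t.
  rewrite /Diff_erlang /Diff /reach_prob.
  rewrite (@erlang_lim R N (@erlang_rate R N) 1 t) // mul1r.
  rewrite (@erlang_lim R N (scale_rates (expR delta) (@erlang_rate R N)) (expR delta) t) //.
    by rewrite distrC ger0_norm.
  by move=> s; rewrite /scale_rates /erlang_rate mulr1.
split.
  rewrite Herl /Diff /reach_prob.
  have eA : (fun n => reach_within E P (pred1 g) n s0 t) =
            (fun n => \sum_(k < n.+1) hit P g k s0 * Fk k t).
    by apply/funext => n; rewrite (@closed R S E P g 1 hE n s0 t t0) mul1r.
  have eB : (fun n => reach_within (scale_rates (expR delta) E) P (pred1 g) n s0 t) =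
            (fun n => \sum_(k < n.+1) hit P g k s0 * Fk k (expR delta * t)).
    by apply/funext => n; rewrite (@closed R S _ P g (expR delta) hEc n s0 t t0).
  rewrite eA eB.
  apply: (@lim_diff R (fun k => hit P g k s0) (fun k => Fk k t) (fun k => Fk k (expR delta * t))).
  - by move=> k; exact: hit_ge0.
  - by move=> n; exact: hit_sum.
  - by move=> k; rewrite Fk_ge0 ?Fk_le1.
  - by move=> k; rewrite Fk_ge0 ?Fk_le1.
  - exact: dN0.
  - move=> k; rewrite distrC ger0_norm ?subr_ge0 ?Fk_mono //.
    exact: d_max.
rewrite Herl /Fk big_mkord.
have -> : 1 - \sum_(j < N) Dp j (expR delta * t) - (1 - \sum_(j < N) Dp j t) =
          \sum_(j < N) (Dp j t - Dp j (expR delta * t)) by rewrite sumrB; ring.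
by apply: eq_bigr => j _; rewrite e_eq.
Qed.
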